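(* Let $G$ be a simple graph and $a,b$ two distinct vertices of $G$. Then the adjacency matrix of $G$ is nondegenerate over $\mathbb{F}_2$ if and only if the adjacency matrix of $\widetilde G_{ab}$ is nondegenerate over $\mathbb{F}_2$; i.e. the nondegeneracy $\nu$ satisfies $\nu(\widetilde G_{ab})=\nu(G)$.
   Context: The adjacency matrix $A(G)$ of a simple graph $G$ with vertices numbered $1,\dots,n$ is the $n\times n$ matrix over $\mathbb{F}_2$ with entry $1$ in position $(i,j)$ iff vertices $i,j$ are adjacent, and $0$ otherwise (zero diagonal). $G$ is nondegenerate if $\det A(G)=1$ over $\mathbb{F}_2$; the nondegeneracy $\nu(G)$ is $1$ if $G$ is nondegenerate and $0$ otherwise. The graph $\widetilde G_{ab}$ (second Vassiliev move) is obtained from $G$ by switching the adjacency between $a$ and each vertex $v\neq a$ of $G$ adjacent to $b$. *)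

(* Defs.v *)
From mathcomp Require Import all_boot all_order all_algebra.
Set Implicit Arguments. Unset Strict Implicit. Unset Printing Implicit Defensive.
Import GRing.Theory.
Local Open Scope ring_scope.

Definition simple_graph (n : nat) (e : rel 'I_n) : Prop :=
  symmetric e /\ irreflexive e.

Definition adj_mx (n : nat) (e : rel 'I_n) : 'M['F_2]_n :=
  \matrix_(i, j) (e i j)%:R.

Definition nondeg_F2 (n : nat) (e : rel 'I_n) : bool :=
  \det (adj_mx e) == 1.

(* Second Vassiliev move: switch adjacency between a and every v <> a
   adjacent to b. *)
Definition vassiliev2 (n : nat) (e : rel 'I_n) (a b : 'I_n) : rel 'I_n :=
  fun x y =>
    (e x y (+) ((x == a) && (y != a) && e b y))
           (+) ((y == a) && (x != a) && e b x).

(* Main.v *)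
Require Import Defs.
From mathcomp Require Import all_boot all_order all_algebra.
Import GRing.Theory.
Local Open Scope ring_scope.

Lemma F2xx (x : 'F_2) : x + x = 0.
Proof. by rewrite -mulr2n -mulr_natl (@pchar_Fp_0 2) ?mul0r. Qed.

Ltac F2s := rewrite /= ?mul0r ?mulr0 ?mul1r ?mulr1 ?addr0 ?add0r ?F2xx ?addr0 ?add0r ?F2xx ?add0r ?addr0.

Lemma dl_mul (n : nat) (a b : 'I_n) (A : 'M['F_2]_n) i j :
  (delta_mx a b *m A) i j = (i == a)%:R * A b j.
Proof.
rewrite mxE (bigD1 b) //= big1 ?addr0; last first.
  by move=> k /negbTE kb; rewrite mxE kb andbF mul0r.
by rewrite mxE eqxx andbT.
Qed.

Lemma ld_mul (n : nat) (a b : 'I_n) (A : 'M['F_2]_n) i j :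
  (A *m delta_mx b a) i j = A i b * (j == a)%:R.
Proof.
rewrite mxE (bigD1 b) //= big1 ?addr0; last first.
  by move=> k /negbTE kb; rewrite mxE kb mulr0.
by rewrite mxE eqxx.
Qed.

Lemma dl_sum (n : nat) (a b i : 'I_n) (f : 'I_n -> 'F_2) :
  \sum_k ((i == a) && (k == b))%:R * f k = (i == a)%:R * f b.
Proof.
rewrite (bigD1 b) //= big1 ?addr0; last first.
  by move=> k /negbTE kb; rewrite kb andbF mul0r.
by rewrite eqxx andbT.
Qed.

Lemma ld_sum (n : nat) (a b j : 'I_n) (f : 'I_n -> 'F_2) :
  \sum_k f k * ((k == b) && (j == a))%:R = f b * (j == a)%:R.
Proof.
rewrite (bigD1 b) //= big1 ?addr0; last first.
  by move=> k /negbTE kb; rewrite kb mulr0.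
by rewrite eqxx.
Qed.

Lemma dl2 (n : nat) (a b x y : 'I_n) (M : 'M['F_2]_n) :
  \sum_j delta_mx a b x j * M j y = (x == a)%:R * M b y.
Proof.
rewrite (bigD1 b) //= big1 ?addr0; last first.
  by move=> k /negbTE kb; rewrite mxE kb andbF mul0r.
by rewrite mxE eqxx andbT.
Qed.

Lemma ld2 (n : nat) (a b x y : 'I_n) (M : 'M['F_2]_n) :
  \sum_j M x j * delta_mx b a j y = M x b * (y == a)%:R.
Proof.
rewrite (bigD1 b) //= big1 ?addr0; last first.
  by move=> k /negbTE kb; rewrite mxE kb mulr0.
by rewrite mxE eqxx.
Qed.

Theorem mainTheorem2 (n : nat) (e : rel 'I_n) (a b : 'I_n) :
  simple_graph e -> a != b ->
  nondeg_F2 (vassiliev2 e a b) = nondeg_F2 e.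
Proof.
move=> [esym eirr] ab.
set P : 'M['F_2]_n := 1%:M + delta_mx a b.
have PP : P *m P = 1%:M.
  rewrite /P mulmxDl !mulmxDr !mul1mx mulmx1 mul_delta_mx_cond eq_sym (negbTE ab).
  rewrite mulr0n addr0 -addrA.
  have -> : delta_mx a b + delta_mx a b = 0 :> 'M['F_2]_n.
    apply/matrixP => i j; rewrite !mxE; exact: F2xx.
  by rewrite addr0.
have E : adj_mx (vassiliev2 e a b) = P *m adj_mx e *m P^T.
  rewrite /P raddfD /= trmx1 trmx_delta mulmxDl mul1mx !mulmxDr !mulmx1.
  apply/matrixP => x y.
  rewrite !mxE ?dl2 ?ld2 !mxE ?dl2 ?ld2 !mxE ?dl2 /vassiliev2 (esym x b) (eirr b).
  case: (eqVneq x a) => [->|xa]; case: (eqVneq y a) => [->|ya] //=;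
  rewrite ?eqxx ?(negbTE ab) ?eirr /=;
  try (case: (e b a)); try (case: (e a y)); try (case: (e b y));
  try (case: (e x a)); try (case: (e b x)); try (case: (e x y)); F2s; F2s; done.
rewrite /nondeg_F2 E !det_mulmx det_tr mulrC mulrA -det_mulmx PP det1 mul1r //.
Qed.
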